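(* Let $(X,d,\kappa)$ be a digital metric space of finite diameter, where $d$ is any $\ell_p$ metric. Let $f: X \to X$ be a function. If $f$ is a Kannan contraction map with constant $\alpha$, or a Chatterjea contraction map with constant $\alpha$, where $0 < \alpha < \frac{1}{2\,\mathrm{diam}\, X}$, then $f$ is a constant function.
   Context: A digital metric space is a triple $(X,d,\kappa)$ with $X\subset\mathbb{Z}^n$, $\kappa$ an adjacency relation on $X$, and $d$ a metric on $X$. The $\ell_p$ metric ($1\le p\le\infty$) is $d(x,y) = (\sum_i |x_i-y_i|^p)^{1/p}$ for $p<\infty$ and $\max_i|x_i-y_i|$ for $p=\infty$. $\mathrm{diam}\, X = \max\{d(x,y) : x,y\in X\}$. $f$ is a Kannan contraction map with constant $\alpha \in (0,1/2)$ if $d(f(x),f(y)) \le \alpha[d(x,f(x)) + d(y,f(y))]$ for all $x,y \in X$. $f$ is a Chatterjea contraction map with constant $\alpha \in (0,1/2)$ if $d(f(x),f(y)) \le \alpha[d(x,f(y)) + d(y,f(x))]$ for all $x,y\in X$. *)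

(* Defs.v *)
From HB Require Import structures.
From mathcomp Require Import all_boot all_order all_algebra.
From mathcomp Require Import all_classical all_reals exp.
Set Implicit Arguments. Unset Strict Implicit. Unset Printing Implicit Defensive.
Import Order.TTheory GRing.Theory Num.Theory.
Local Open Scope ring_scope.
Local Open Scope classical_set_scope.

Definition zpoint (n : nat) := 'I_n -> int.

(* The exponent p of an l_p metric: [Some p] is a finite p (with 1 <= p),
   [None] is p = infinity. *)
Definition lp_exponent_ok (R : realType) (p : option R) : Prop :=
  match p with Some q => 1 <= q | None => True end.

Definition lp_dist (R : realType) (n : nat) (p : option R) (x y : zpoint n) : R :=
  match p with
  | Some q => (\sum_(i < n) `|((x i - y i)%:~R : R)| `^ q) `^ q^-1
  | None => \big[Num.max/0]_(i < n) `|((x i - y i)%:~R : R)|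
  end.

Definition finite_diam (T : Type) (R : realType) (X : set T) (d : T -> T -> R) : Prop :=
  exists M : R, forall x y, X x -> X y -> d x y <= M.

(* diam X = max { d x y : x, y in X } (taken as the supremum, which is attained
   when the diameter is finite since X is then a finite subset of Z^n). *)
Definition diam (T : Type) (R : realType) (X : set T) (d : T -> T -> R) : R :=
  sup [set d x y | x in X & y in X].

Definition kannan_contraction (T : Type) (R : realType) (X : set T)
    (d : T -> T -> R) (f : T -> T) (alpha : R) : Prop :=
  0 < alpha < 2^-1 /\
  forall x y, X x -> X y -> d (f x) (f y) <= alpha * (d x (f x) + d y (f y)).

Definition chatterjea_contraction (T : Type) (R : realType) (X : set T)
    (d : T -> T -> R) (f : T -> T) (alpha : R) : Prop :=
  0 < alpha < 2^-1 /\
  forall x y, X x -> X y -> d (f x) (f y) <= alpha * (d x (f y) + d y (f x)).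

(* Main.v *)
Require Import Defs.
From HB Require Import structures.
From mathcomp Require Import all_boot all_order all_algebra.
From mathcomp Require Import all_classical all_reals exp.
From mathcomp Require Import lra.
Import Order.TTheory GRing.Theory Num.Theory.
Local Open Scope ring_scope.
Local Open Scope classical_set_scope.

Lemma bigmax_ge (R : realType) (n : nat) (F : 'I_n -> R) (r : seq 'I_n) i :
  i \in r -> F i <= \big[Num.max/0]_(j <- r) F j.
Proof.
elim: r => [//|a r IH]; rewrite inE big_cons => /orP [/eqP ->|/IH H].
  by rewrite le_max lexx.
by rewrite le_max H orbT.
Qed.

Lemma lp_dist_lt1 (R : realType) (n : nat) (p : option R) (u v : zpoint n) :
  lp_exponent_ok p -> lp_dist p u v < 1 -> u = v.
Proof.
move=> hp hd; apply: boolp.funext => i; apply/eqP; apply: contraLR hd => hne.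
have h1 : (1 : R) <= `|((u i - v i)%:~R : R)|.
  by rewrite -intr_norm ler1z -gtz0_ge1 normr_gt0 subr_eq0.
rewrite -leNgt; case: p hp => [q|] /= hq.
- have hq0 : 0 <= q^-1 by rewrite invr_ge0; lra.
  have hs : 1 <= \sum_(j < n) `|((u j - v j)%:~R : R)| `^ q.
    rewrite (bigD1 i) //=.
    have h3 : 0 <= \sum_(j < n | j != i) `|((u j - v j)%:~R : R)| `^ q.
      by apply: sumr_ge0 => j _; exact: powR_ge0.
    have h2 : 1 <= `|((u i - v i)%:~R : R)| `^ q.
      rewrite -{1}(powRr0 `|((u i - v i)%:~R : R)|).
      by apply: ler_powR => //; lra.
    lra.
  by rewrite -{1}(powRr0 (\sum_(j < n) `|((u j - v j)%:~R : R)| `^ q)) ler_powR.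
- apply: le_trans h1 _; apply: (@bigmax_ge R n (fun j => `|((u j - v j)%:~R : R)|)).
  exact: mem_index_enum.
Qed.

Theorem mainTheorem6 (R : realType) (n : nat) (X : set (zpoint n))
    (kappa : rel (zpoint n)) (p : option R) (f : zpoint n -> zpoint n) (alpha : R) :
  lp_exponent_ok p ->
  finite_diam X (lp_dist p) ->
  (forall x, X x -> X (f x)) ->
  (kannan_contraction X (lp_dist p) f alpha \/
   chatterjea_contraction X (lp_dist p) f alpha) ->
  0 < alpha < (2 * diam X (lp_dist p))^-1 ->
  forall x y, X x -> X y -> f x = f y.
Proof.
move=> hp [M hM] hf hc /andP [ha0 haD] x y Xx Xy.
set D := diam X (lp_dist p) in haD.
have hub : forall a b, X a -> X b -> lp_dist p a b <= D.
  move=> a b Xa Xb; apply: ub_le_sup; last by exists a => //; exists b.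
  by exists M => _ [c Xc [e Xe <-]]; exact: hM.
have D2 : 0 < 2 * D by rewrite -invr_gt0; exact: lt_trans haD.
have hinv : (2 * D)^-1 * (2 * D) = 1 by rewrite mulVf // gt_eqF.
have key : alpha * (2 * D) < 1.
  by move: haD; rewrite -(ltr_pM2r D2) hinv.
have fin : forall a b, a <= D -> b <= D -> alpha * (a + b) < 1.
  move=> a b ha hb.
  have hle : alpha * (a + b) <= alpha * (2 * D).
    apply: ler_wpM2l; first exact: ltW.
    by rewrite mulr_natl mulr2n; exact: lerD.
  exact: le_lt_trans hle key.
apply: (@lp_dist_lt1 R n p _ _ hp).
case: hc => [[_ H]|[_ H]]; apply: le_lt_trans (H _ _ Xx Xy) _; by apply: fin; apply: hub => //; apply: hf.
Qed.
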